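(* The $R$-algebra $\mathcal H_{n,r}$ is isomorphic to the $R$-algebra with generators $t_1,\ldots,t_n,g_1,\ldots,g_{n-1}$ and defining relations (1) $(t_i-u_1)\cdots(t_i-u_r)=0$ for $1\le i\le n$; (2) $t_it_j=t_jt_i$ for $1\le i,j\le n$; (3) $g_jt_i=t_{s_j(i)}g_j$ for $1\le j\le n-1$, $1\le i\le n$; (4) $g_ig_j=g_jg_i$ for $|i-j|>1$; (5) $g_ig_{i+1}g_i=g_{i+1}g_ig_{i+1}$ for $1\le i\le n-2$; (6) $g_i^2=1+(q-q^{-1})e_ig_i$ for $1\le i\le n-1$, where in the presented algebra $e_i:=\sum_{\mathbf k\in[1,r]^n,\ k_i=k_{i+1}}b_{\mathbf k}$ with $b_{\mathbf k}:=\prod_{i=1}^n\prod_{1\le j\le r,\,j\ne k_i}\frac{t_i-u_j}{u_{k_i}-u_j}$; the isomorphism sends $t_i\mapsto t_i$ and $g_i\mapsto T_i+B'_{i,i+1}$.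
   Context: Standing setup: $R$ is an integral domain, $n\ge 1$, $r\ge 1$, and $q,u_1,\ldots,u_r\in R$ with $q$ invertible in $R$ and $\Delta:=\prod_{1\le j<i\le r}(u_i-u_j)$ invertible in $R$. For $1\le c\le r$ let $F_c(X)\in R[X]$ be the unique polynomial of degree $\le r-1$ with $F_c(u_{c'})=\delta_{c,c'}\Delta$ for all $1\le c'\le r$. The modified Ariki–Koike (Shoji) algebra $\mathcal H_{n,r}=\mathcal H_{n,r}(R,q,u_1,\ldots,u_r)$ is the associative $R$-algebra generated by $t_1,\ldots,t_n,T_1,\ldots,T_{n-1}$ subject to: $(T_i-q)(T_i+q^{-1})=0$; $(t_i-u_1)\cdots(t_i-u_r)=0$; $T_iT_{i+1}T_i=T_{i+1}T_iT_{i+1}$; $T_iT_j=T_jT_i$ for $|i-j|\ge2$; $t_it_j=t_jt_i$; $T_jt_k=t_kT_j$ for $k\ne j,j+1$; and for $2\le j\le n$: $T_{j-1}t_j=t_{j-1}T_{j-1}+\Delta^{-2}\sum_{1\le c_1<c_2\le r}(u_{c_2}-u_{c_1})(q-q^{-1})F_{c_1}(t_{j-1})F_{c_2}(t_j)$ and $T_{j-1}t_{j-1}=t_jT_{j-1}-\Delta^{-2}\sum_{1\le c_1<c_2\le r}(u_{c_2}-u_{c_1})(q-q^{-1})F_{c_1}(t_{j-1})F_{c_2}(t_j)$. Write $[1,r]=\{1,\ldots,r\}$ and, in $\mathcal H_{n,r}$, $b_{\mathbf k}:=\prod_{i=1}^n\prod_{1\le j\le r,\,j\ne k_i}\frac{t_i-u_j}{u_{k_i}-u_j}$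 for $\mathbf k\in[1,r]^n$ and $B'_{i,j}:=-(q-q^{-1})\sum_{\mathbf k,\ k_i<k_j}b_{\mathbf k}$. $s_j=(j\ j+1)\in\mathfrak S(n)$. *)

(* Defs.v *)
From HB Require Import structures.
From mathcomp Require Import all_boot all_order all_algebra.
From mathcomp Require Import fingroup perm.
Set Implicit Arguments. Unset Strict Implicit. Unset Printing Implicit Defensive.
Import Order.TTheory GRing.Theory.
Local Open Scope ring_scope.

(* Conventions (0-based): the paper's n >= 1 is written n.+1 below.
   t_1..t_{n+1} are indexed by 'I_n.+1, T_1..T_n (resp. g_1..g_n) by 'I_n;
   the 0-based index j : 'I_n of T stands for T_{j+1}, which involves
   t_{j+1} = t (jlo j) and t_{j+2} = t (jhi j). u_1..u_r are u : 'I_r -> R. *)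

Section Defs.
Variables (R : idomainType) (r : nat) (u : 'I_r -> R) (q : R).

Definition jlo n (j : 'I_n) : 'I_n.+1 := widen_ord (leqnSn n) j.
Definition jhi n (j : 'I_n) : 'I_n.+1 := lift ord0 j.

Definition Delta : R := \prod_(i < r) \prod_(j < r | (j < i)%N) (u i - u j).

Variable A : algType R.

(* F_c(x): the unique polynomial of degree <= r-1 with F_c(u_c') = delta_{c,c'} Delta
   (Lagrange form), evaluated at x : A. *)
Definition Fev (c : 'I_r) (x : A) : A :=
  Delta *: \prod_(j < r | j != c) ((u c - u j)^-1 *: (x - (u j)%:A)).

Definition bk n (t : 'I_n -> A) (k : {ffun 'I_n -> 'I_r}) : A :=
  \prod_(i < n) \prod_(j < r | j != k i) ((u (k i) - u j)^-1 *: (t i - (u j)%:A)).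

Definition Bp n (t : 'I_n -> A) (i j : 'I_n) : A :=
  - (q - q^-1) *: \sum_(k : {ffun 'I_n -> 'I_r} | (k i < k j)%N) bk t k.

(* e_i, i.e. e_{j+1} for 0-based j *)
Definition ee n (t : 'I_n.+1 -> A) (j : 'I_n) : A :=
  \sum_(k : {ffun 'I_n.+1 -> 'I_r} | k (jlo j) == k (jhi j)) bk t k.

(* the image of g_{j+1}: T_{j+1} + B'_{j+1,j+2} *)
Definition gimg n (t : 'I_n.+1 -> A) (T : 'I_n -> A) (j : 'I_n) : A :=
  T j + Bp t (jlo j) (jhi j).

Definition corr (x y : A) : A :=
  \sum_(c1 < r) \sum_(c2 < r | (c1 < c2)%N)
     ((Delta ^- 2) * (u c2 - u c1) * (q - q^-1)) *: (Fev c1 x * Fev c2 y).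

(* defining relations of the modified Ariki-Koike algebra H_{n+1,r} *)
Definition HRel n (t : 'I_n.+1 -> A) (T : 'I_n -> A) : Prop :=
  (forall i, (T i - q%:A) * (T i + q^-1%:A) = 0) /\
      (forall i, \prod_(c < r) (t i - (u c)%:A) = 0) /\
      (forall i j : 'I_n, j = i.+1 :> nat -> T i * T j * T i = T j * T i * T j) /\
      (forall i j : 'I_n, (i.+1 < j)%N || (j.+1 < i)%N -> T i * T j = T j * T i) /\
      (forall i j, t i * t j = t j * t i) /\
      (forall (j : 'I_n) (k : 'I_n.+1), k != jlo j -> k != jhi j ->
          T j * t k = t k * T j) /\
      (forall j : 'I_n,
          T j * t (jhi j) = t (jlo j) * T j + corr (t (jlo j)) (t (jhi j))
       /\ T j * t (jlo j) = t (jhi j) * T j - corr (t (jlo j)) (t (jhi j))).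

Definition GRel n (t : 'I_n.+1 -> A) (g : 'I_n -> A) : Prop :=
  (forall i, \prod_(c < r) (t i - (u c)%:A) = 0) /\
      (forall i j, t i * t j = t j * t i) /\
      (forall (j : 'I_n) (i : 'I_n.+1), g j * t i = t (tperm (jlo j) (jhi j) i) * g j) /\
      (forall i j : 'I_n, (i.+1 < j)%N || (j.+1 < i)%N -> g i * g j = g j * g i) /\
      (forall i j : 'I_n, j = i.+1 :> nat -> g i * g j * g i = g j * g i * g j) /\
      (forall i, g i * g i = 1 + (q - q^-1) *: (ee t i * g i)).

End Defs.

Definition presented (R : comRingType) (n : nat) (A : algType R)
    (Rel : forall B : algType R, ('I_n.+1 -> B) -> ('I_n -> B) -> Prop)
    (t : 'I_n.+1 -> A) (T : 'I_n -> A) : Prop :=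
  Rel A t T /\
  forall (B : algType R) (tB : 'I_n.+1 -> B) (TB : 'I_n -> B), Rel B tB TB ->
    exists f : {lrmorphism A -> B},
      [/\ (forall i, f (t i) = tB i), (forall j, f (T j) = TB j) &
          forall f' : {lrmorphism A -> B},
            (forall i, f' (t i) = tB i) -> (forall j, f' (T j) = TB j) ->
            forall x, f' x = f x].

(* Main.v *)
Require Import Defs.
From HB Require Import structures.
From mathcomp Require Import all_boot all_order all_algebra all_fingroup.
From mathcomp Require Import ring ssrAC zify.
From Stdlib Require Import FunctionalExtensionality.
Set Implicit Arguments. Unset Strict Implicit. Unset Printing Implicit Defensive.
Import GRing.Theory.
Local Open Scope ring_scope.
Section Single.
Variables (R : idomainType) (r : nat) (u : 'I_r -> R).
Hypothesis HD : Delta u \is a GRing.unit.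

Lemma udiff_unit (c j : 'I_r) : c != j -> u c - u j \is a GRing.unit.
Proof.
move=> ncj.
have key : forall a b : 'I_r, (b < a)%N -> u a - u b \is a GRing.unit.
  move=> a b ba; move: HD; rewrite /Delta (bigD1 a) //= unitrM => /andP[H _].
  by move: H; rewrite (bigD1 b) //= unitrM => /andP[].
case: (ltngtP c j) => h; first by rewrite -opprB unitrN key.
  by rewrite key.
by move: ncj; rewrite (val_inj h) eqxx.
Qed.

Definition Lp (c : 'I_r) : {poly R} :=
  \prod_(j < r | j != c) ((u c - u j)^-1 *: ('X - (u j)%:P)).
Definition Mp : {poly R} := \prod_(c < r) ('X - (u c)%:P).

Lemma Lp_horner c y : (Lp c).[y] = \prod_(j < r | j != c) ((u c - u j)^-1 * (y - u j)).
Proof.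
rewrite /Lp horner_prod; apply: eq_bigr => j _.
by rewrite hornerZ hornerXsubC.
Qed.

Lemma Lp_eval c d : (Lp c).[u d] = (c == d)%:R.
Proof.
rewrite Lp_horner; have [->|ncd] := eqVneq c d.
  rewrite big1 // => j nj; by rewrite mulVr // udiff_unit // eq_sym.
by rewrite (bigD1 d) 1?eq_sym //= subrr mulr0 mul0r.
Qed.

Lemma u_inj : injective u.
Proof.
move=> a b eab; apply/eqP; apply/negPn/negP => nab.
by move: (udiff_unit nab); rewrite eab subrr unitr0.
Qed.

Lemma roots_Mp (p : {poly R}) : (forall d, p.[u d] = 0) -> exists Q, p = Q * Mp.
Proof.
move=> Hp.
set s := [seq u d | d <- index_enum 'I_r].
have H1 : all (root p) s by apply/allP => y /mapP[d _ ->]; apply/rootP.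
have H2 : uniq_roots s.
  rewrite /s; elim: (index_enum 'I_r) (index_enum_uniq 'I_r) => //= a l IH /andP[al ul].
  rewrite IH // andbT; apply/allP => y /mapP[b bl ->].
  rewrite /diff_roots mulrC eqxx /= udiff_unit //.
  by apply: contraNneq al => <-.
have [Q ->] := uniq_roots_prod_XsubC H1 H2.
by exists Q; rewrite big_map.
Qed.

Variable (B : algType R) (x : B).
Hypothesis Hx : \prod_(c < r) (x - (u c)%:A) = 0.

Lemma hx_Mp : horner_alg x Mp = 0.
Proof.
rewrite /Mp rmorph_prod -Hx; apply: eq_bigr => c _.
by rewrite rmorphB /= horner_algX horner_algC.
Qed.

Lemma hx_root p : (forall d, p.[u d] = 0) -> horner_alg x p = 0.
Proof. by case/roots_Mp=> Q ->; rewrite rmorphM /= hx_Mp mulr0. Qed.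

Definition Ec (c : 'I_r) (y : B) :=
  \prod_(j < r | j != c) ((u c - u j)^-1 *: (y - (u j)%:A)).

Lemma hxXsubC (y : B) a : horner_alg y ('X - a%:P) = y - a%:A.
Proof. by rewrite rmorphB /= horner_algX horner_algC. Qed.

Lemma hxZ (y : B) a p : horner_alg y (a *: p) = a *: horner_alg y p.
Proof. by rewrite -mul_polyC rmorphM /= horner_algC mulr_algl. Qed.

Lemma Ec_hx c : Ec c x = horner_alg x (Lp c).
Proof.
rewrite /Lp rmorph_prod; apply: eq_bigr => j _.
by rewrite -hxXsubC -hxZ.
Qed.

Lemma sum_Ec : \sum_c Ec c x = 1.
Proof.
apply/eqP; rewrite -subr_eq0; apply/eqP.
have -> : \sum_c Ec c x - 1 = horner_alg x (\sum_c Lp c - 1).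
  by rewrite rmorphB rmorph_sum rmorph1; congr (_ - _); apply: eq_bigr => c _; rewrite Ec_hx.
apply: hx_root => d; rewrite hornerD hornerN hornerC horner_sum.
rewrite (bigD1 d) //= Lp_eval eqxx big1 ?addr0 ?subrr // => c ncd.
by rewrite Lp_eval (negbTE ncd).
Qed.

Lemma Ec_eig c : x * Ec c x = u c *: Ec c x.
Proof.
apply/eqP; rewrite -subr_eq0 -mulr_algl -mulrBl; apply/eqP.
have -> : (x - (u c)%:A) * Ec c x = horner_alg x (('X - (u c)%:P) * Lp c).
  by rewrite rmorphM rmorphB /= horner_algX horner_algC Ec_hx.
apply: hx_root => d; rewrite hornerM hornerXsubC Lp_eval.
by have [->|] := eqVneq c d; rewrite ?subrr ?mul0r ?mulr0.
Qed.

End Single.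

Lemma comm_Ec (R : idomainType) (r : nat) (u : 'I_r -> R) (B : algType R) (x y : B) c :
  GRing.comm y x -> GRing.comm y (Ec u c x).
Proof.
move=> yx; apply: commr_prod => j _.
rewrite /GRing.comm -scalerAr -scalerAl; congr (_ *: _).
by rewrite mulrBr mulrBl yx mulr_algl mulr_algr.
Qed.

Section Gen.
Variables (R : idomainType) (B : algType R).

Lemma prod_eig (I : eqType) (s : seq I) (P : pred I) (F : I -> B) (a : B) i0 c :
  i0 \in s -> P i0 -> (forall l, GRing.comm a (F l)) -> a * F i0 = c *: F i0 ->
  a * \prod_(l <- s | P l) F l = c *: \prod_(l <- s | P l) F l.
Proof.
move=> + Pi0 Hc He; elim: s => //= l s IH; rewrite in_cons big_cons => /orP[/eqP<-|i0s].
  by rewrite Pi0 mulrA He scalerAl.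
case: (P l); last exact: IH.
by rewrite mulrA Hc -mulrA IH // scalerAr.
Qed.

Lemma prod_act (I : Type) (s : seq I) (P : pred I) (F : I -> B) (a : I -> R) (x : B) :
  (forall l, F l * x = a l *: x) ->
  (\prod_(l <- s | P l) F l) * x = (\prod_(l <- s | P l) a l) *: x.
Proof.
move=> H; elim/big_rec2: _ => [|l y z _ IH]; first by rewrite mul1r scale1r.
by rewrite -mulrA IH -scalerAr H scalerA mulrC.
Qed.

End Gen.

Section Multi.
Variables (R : idomainType) (r : nat) (u : 'I_r -> R).
Hypothesis HD : Delta u \is a GRing.unit.
Variables (B : algType R) (n : nat).
Local Notation N := n.+1.
Variable (t : 'I_N -> B).
Hypothesis Ht : forall i, \prod_(c < r) (t i - (u c)%:A) = 0.
Hypothesis Htc : forall i j, t i * t j = t j * t i.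

Local Notation b := (bk u t).
Local Notation kT := {ffun 'I_N -> 'I_r}.

Lemma bkE k : b k = \prod_(i < N) Ec u (k i) (t i).
Proof. by []. Qed.

Lemma bk_eig i k : t i * b k = u (k i) *: b k.
Proof.
rewrite bkE; apply: (prod_eig (mem_index_enum i)) => //.
  by move=> l; apply: comm_Ec; apply: Htc.
exact: Ec_eig.
Qed.

Lemma bk_eigr i k : b k * t i = u (k i) *: b k.
Proof.
rewrite -bk_eig; apply/esym; apply: commr_prod => l _; apply: comm_Ec; apply: Htc.
Qed.

Lemma Ec_b c i k : Ec u c (t i) * b k = (k i == c)%:R *: b k.
Proof.
rewrite /Ec (@prod_act _ _ _ _ _ _ (fun j => (u c - u j)^-1 * (u (k i) - u j))).
  by rewrite -Lp_horner Lp_eval // eq_sym.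
move=> j; rewrite -scalerAl mulrBl bk_eig mulr_algl -scalerBl scalerA //.
Qed.

Lemma bk_orth k l : b k * b l = (k == l)%:R *: b l.
Proof.
rewrite {1}bkE (@prod_act _ _ _ _ _ _ (fun i => (l i == k i)%:R)); last by move=> i; rewrite Ec_b.
congr (_ *: _); have [->|nkl] := eqVneq k l.
  by rewrite big1 // => i _; rewrite eqxx.
have [i ni] : exists i, l i != k i.
  apply/existsP; rewrite -negb_forall; apply: contra nkl => /forallP H.
  by apply/eqP/ffunP => i; apply/esym/eqP/H.
by rewrite (bigD1 i) //= (negbTE ni) mul0r.
Qed.

Lemma sum_bk : \sum_k b k = 1.
Proof.
transitivity (\prod_(i < N) \sum_(c < r) Ec u c (t i)); first by rewrite bigA_distr_bigA.
by rewrite big1 // => i _; apply: sum_Ec.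
Qed.

Definition Phi (f : kT -> R) : B := \sum_k f k *: b k.

Lemma Phi_ext f h : f =1 h -> Phi f = Phi h.
Proof. by move=> e; apply: eq_bigr => k _; rewrite e. Qed.

Lemma PhiD f h : Phi f + Phi h = Phi (fun k => f k + h k).
Proof. by rewrite /Phi -big_split; apply: eq_bigr => k _; rewrite scalerDl. Qed.

Lemma PhiN f : - Phi f = Phi (fun k => - f k).
Proof. by rewrite /Phi -sumrN; apply: eq_bigr => k _; rewrite scaleNr. Qed.

Lemma PhiZ a f : a *: Phi f = Phi (fun k => a * f k).
Proof. by rewrite /Phi scaler_sumr; apply: eq_bigr => k _; rewrite scalerA. Qed.

Lemma Phi_const a : Phi (fun _ => a) = a%:A.
Proof. by rewrite /Phi -scaler_sumr sum_bk. Qed.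

Lemma Phi1 : Phi (fun _ => 1) = 1.
Proof. by rewrite Phi_const scale1r. Qed.

Lemma bk_Phi k h : b k * Phi h = h k *: b k.
Proof.
rewrite /Phi mulr_sumr (bigD1 k) //= big1 ?addr0.
  by rewrite -scalerAr bk_orth eqxx scale1r.
by move=> l nl; rewrite -scalerAr bk_orth eq_sym (negbTE nl) scale0r scaler0.
Qed.

Lemma PhiM f h : Phi f * Phi h = Phi (fun k => f k * h k).
Proof.
rewrite {1}/Phi mulr_suml; apply: eq_bigr => k _.
by rewrite -scalerAl bk_Phi scalerA.
Qed.

Lemma Phi_tl i f : t i * Phi f = Phi (fun k => u (k i) * f k).
Proof.
rewrite /Phi mulr_sumr; apply: eq_bigr => k _.
by rewrite -scalerAr bk_eig scalerA mulrC.
Qed.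

Lemma Phi_tr i f : Phi f * t i = Phi (fun k => u (k i) * f k).
Proof.
rewrite /Phi mulr_suml; apply: eq_bigr => k _.
by rewrite -scalerAl bk_eigr scalerA mulrC.
Qed.

Lemma Ec_Phi c i : Ec u c (t i) = Phi (fun k => (k i == c)%:R).
Proof.
rewrite -[LHS]mulr1 -sum_bk mulr_sumr; apply: eq_bigr => k _; exact: Ec_b.
Qed.

Lemma Phi_sum (I : Type) (s : seq I) (P : pred I) (F : I -> kT -> R) :
  \sum_(i <- s | P i) Phi (F i) = Phi (fun k => \sum_(i <- s | P i) F i k).
Proof.
elim: s => [|i s IH].
  by rewrite big_nil /Phi big1 // => k _; rewrite big_nil scale0r.
have [Pi|nPi] := boolP (P i); rewrite big_cons ?Pi ?(negbTE nPi) IH.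
  by rewrite PhiD; apply: Phi_ext => k; rewrite big_cons Pi.
by apply: Phi_ext => k; rewrite big_cons (negbTE nPi).
Qed.

Definition act (s : {perm 'I_N}) (k : kT) : kT := [ffun l => k (s l)].

Lemma act_inv (s : {perm 'I_N}) : (forall i, s (s i) = i) -> forall k, act s (act s k) = k.
Proof. by move=> Hs k; apply/ffunP => i; rewrite !ffunE Hs. Qed.

Section GAct.
Variables (g : B) (s : {perm 'I_N}).
Hypothesis Hs : forall i, s (s i) = i.
Hypothesis Hg : forall i, g * t i = t (s i) * g.

Lemma scale_unit_eq0 (a : R) (X : B) : a \is a GRing.unit -> a *: X = 0 -> X = 0.
Proof. by move=> ua e; rewrite -[X]scale1r -(mulVr ua) -scalerA e scaler0. Qed.

Lemma bgb0 m k : m != act s k -> b m * g * b k = 0.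
Proof.
move=> nm.
have [i ni] : exists i, m i != k (s i).
  apply/existsP; rewrite -negb_forall; apply: contra nm => /forallP H.
  by apply/eqP/ffunP => i; rewrite ffunE; apply/eqP/H.
apply: (@scale_unit_eq0 (u (m i) - u (k (s i)))); first exact: udiff_unit.
have e1 : t i * (b m * g * b k) = u (m i) *: (b m * g * b k) by rewrite !mulrA bk_eig -!scalerAl.
have tg : t i * g = g * t (s i) by rewrite Hg Hs.
have e2 : t i * (b m * g * b k) = u (k (s i)) *: (b m * g * b k).
  have tb : t i * b m = b m * t i by rewrite bk_eig bk_eigr.
  by rewrite !mulrA tb -(mulrA (b m)) tg mulrA -mulrA bk_eig -scalerAr.
by rewrite scalerBl -e1 -e2 subrr.
Qed.

Lemma act_inj : injective (act s).
Proof. exact: can_inj (act_inv Hs). Qed.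

Lemma g_b k : g * b k = b (act s k) * g.
Proof.
transitivity (b (act s k) * g * b k).
  rewrite -[g * b k]mul1r -sum_bk mulr_suml (bigD1 (act s k)) //= big1 ?addr0 ?mulrA //.
  by move=> m nm; rewrite mulrA bgb0.
rewrite -[RHS]mulr1 -sum_bk mulr_sumr (bigD1 k) //= big1 ?addr0 //.
move=> m nm; apply: bgb0; apply: contra nm => /eqP/act_inj ->; by [].
Qed.

Lemma g_Phi f : g * Phi f = Phi (fun k => f (act s k)) * g.
Proof.
rewrite /Phi mulr_sumr mulr_suml [RHS](reindex_inj act_inj); apply: eq_bigr => k _.
by rewrite act_inv // -scalerAr g_b scalerAl.
Qed.

End GAct.

Lemma Bp_Phi q i1 i2 :
  Bp u q t i1 i2 = - Phi (fun k => (q - q^-1) * ((k i1 < k i2)%N)%:R).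
Proof.
rewrite /Bp scaleNr -PhiZ; congr (- (_ *: _)).
rewrite /Phi big_mkcond; apply: eq_bigr => k _.
by case: ifP => _; rewrite ?scale1r ?scale0r.
Qed.

Lemma ee_Phi j : ee u t j = Phi (fun k => (k (jlo j) == k (jhi j))%:R).
Proof.
rewrite /ee /Phi big_mkcond; apply: eq_bigr => k _.
by case: ifP => _; rewrite ?scale1r ?scale0r.
Qed.

Lemma corr_Phi q i1 i2 : corr u q (t i1) (t i2) =
  Phi (fun k => (q - q^-1) * ((k i1 < k i2)%N)%:R * (u (k i2) - u (k i1))).
Proof.
have EF c x : Fev u c x = Delta u *: Ec u c x by [].
rewrite /corr.
have step : forall c1 c2 : 'I_r,
  ((Delta u ^- 2) * (u c2 - u c1) * (q - q^-1)) *: (Fev u c1 (t i1) * Fev u c2 (t i2)) =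
  Phi (fun k => (u c2 - u c1) * (q - q^-1) * ((k i1 == c1)%:R * (k i2 == c2)%:R)).
  move=> c1 c2; rewrite !EF -scalerAl -scalerAr !scalerA !Ec_Phi PhiM PhiZ.
  apply: Phi_ext => k; congr (_ * _).
  have HDD : Delta u ^- 2 * (Delta u * Delta u) = 1 by rewrite -expr2 mulVr // unitrX.
  rewrite -[RHS]mul1r -HDD; set z := Delta u ^- 2; ring.
under eq_bigr => c1 _ do under eq_bigr => c2 _ do rewrite step.
under eq_bigr => c1 _ do rewrite Phi_sum.
rewrite Phi_sum; apply: Phi_ext => k.
rewrite (bigD1 (k i1)) //= [X in _ + X]big1 ?addr0; last first.
  move=> c1 nc1; apply: big1 => c2 _; by rewrite eq_sym (negbTE nc1) mul0r mulr0.
have [h|h] := boolP (k i1 < k i2)%N.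
  rewrite (bigD1 (k i2)) //= big1 ?addr0 => [|c2 /andP[_ nc]]; last first.
    by rewrite eq_sym (negbTE nc) mulr0 mulr0.
  by rewrite !eqxx !mulr1 mulrC.
rewrite big1 ?mulr0 ?mul0r // => c2 h2.
have -> : (k i2 == c2) = false by apply/negbTE; apply: contra h => /eqP ->.
by rewrite !mulr0.
Qed.

Lemma PhiB f h : Phi f - Phi h = Phi (fun k => f k - h k).
Proof. by rewrite PhiN PhiD. Qed.

Lemma Phi0 : Phi (fun _ => 0) = 0.
Proof. by rewrite Phi_const scale0r. Qed.

Lemma zmod_sub4 (V : zmodType) (a b c d : V) : (a - b) - (c - d) = (a - c) - (b - d).
Proof. by rewrite !opprB addrACA [RHS]addrACA [- b + _]addrC. Qed.

Section Equiv.
Variables (q : R) (T : 'I_n -> B).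
Hypothesis Hq : q \is a GRing.unit.
Local Notation d := (q - q^-1).
Local Notation s j := (tperm (jlo j) (jhi j)).
Definition pj (j : 'I_n) (k : kT) : R := ((k (jlo j) < k (jhi j))%N)%:R.
Local Notation hP j := (Phi (fun k => d * pj j k)).
Local Notation g := (gimg u q t T).

Lemma gE j : g j = T j - hP j.
Proof. by rewrite /gimg Bp_Phi. Qed.

Lemma gcomm j i : g j * t i - t (s j i) * g j =
  (T j * t i - t (s j i) * T j) - Phi (fun k => d * pj j k * (u (k i) - u (k (s j i)))).
Proof.
rewrite gE mulrBl mulrBr Phi_tr Phi_tl zmod_sub4 PhiB; congr (_ - _).
by apply: Phi_ext => k; rewrite mulrBr [u _ * _]mulrC [u (k (s j i)) * _]mulrC.
Qed.

Lemma lohi_neq (j : 'I_n) : jlo j != jhi j.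
Proof. by rewrite -val_eqE /= /bump leq0n add1n neq_ltn ltnSn. Qed.

Definition HcT : Prop :=
  (forall (j : 'I_n) (k : 'I_N), k != jlo j -> k != jhi j -> T j * t k = t k * T j) /\
  (forall j : 'I_n,
          T j * t (jhi j) = t (jlo j) * T j + corr u q (t (jlo j)) (t (jhi j))
       /\ T j * t (jlo j) = t (jhi j) * T j - corr u q (t (jlo j)) (t (jhi j))).

Lemma comm3 : HcT <-> (forall (j : 'I_n) (i : 'I_N), g j * t i = t (s j i) * g j).
Proof.
have Chi j : g j * t (jhi j) - t (jlo j) * g j =
   (T j * t (jhi j) - t (jlo j) * T j) - corr u q (t (jlo j)) (t (jhi j)).
  by rewrite -{1}(tpermR (jlo j) (jhi j)) gcomm tpermR corr_Phi.
have Clo j : g j * t (jlo j) - t (jhi j) * g j =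
   (T j * t (jlo j) - t (jhi j) * T j) + corr u q (t (jlo j)) (t (jhi j)).
  rewrite -{1}(tpermL (jlo j) (jhi j)) gcomm tpermL corr_Phi PhiN; congr (_ + _).
  by apply: Phi_ext => k; rewrite -mulrN opprB.
have Co j i : i != jlo j -> i != jhi j -> g j * t i - t i * g j = T j * t i - t i * T j.
  move=> h1 h2; have h1' : jlo j != i by rewrite eq_sym.
  have h2' : jhi j != i by rewrite eq_sym.
  rewrite -{2}(tpermD h1' h2') gcomm tpermD //.
  by rewrite (@Phi_ext _ (fun _ => 0)) ?Phi0 ?subr0 // => k; rewrite subrr mulr0.
split.
  case=> Ho Hlh j i; apply/eqP; rewrite -subr_eq0.
  have [->|n1] := eqVneq i (jlo j).
    by rewrite tpermL Clo (proj2 (Hlh j)) addrAC subrK subrr.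
  have [->|n2] := eqVneq i (jhi j).
    by rewrite tpermR Chi (proj1 (Hlh j)) addrAC addrK subrr.
  by rewrite tpermD // 1?eq_sym // Co // Ho // subrr.
move=> Hg; split.
  move=> j k h1 h2; apply/eqP; rewrite -subr_eq0 -Co // -{2}(@tpermD _ (jlo j) (jhi j) k) 1?eq_sym //.
  by rewrite Hg subrr.
move=> j; split.
  have := Chi j; rewrite Hg tpermR subrr => /esym/eqP; rewrite subr_eq0 subr_eq.
  by move=> /eqP ->; rewrite addrC.
have := Clo j; rewrite Hg tpermL subrr => /esym/eqP; rewrite addr_eq0 subr_eq.
by move=> /eqP ->; rewrite addrC.
Qed.

Lemma nat3 (a b : nat) : ((b < a)%N%:R + (a < b)%N%:R - 1 : R) = - (a == b)%:R.
Proof. by case: ltngtP => _; rewrite /= ?addr0 ?add0r ?subrr ?oppr0 ?sub0r. Qed.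

Lemma quadQ (x : B) : (x - q%:A) * (x + q^-1%:A) = x * x - d *: x - 1.
Proof.
rewrite mulrDr !mulrBl mulr_algr mulr_algl -scalerAl mul1r scalerA mulrV // scale1r.
rewrite scalerBl opprB !addrA; congr (_ - 1); exact: addrAC.
Qed.

Section J.
Variable j : 'I_n.
Hypothesis Hg : forall i, g j * t i = t (s j i) * g j.

Lemma gPhi f : g j * Phi f = Phi (fun k => f (act (s j) k)) * g j.
Proof. by apply: g_Phi => // i; rewrite tpermK. Qed.

Lemma quad_gen (G : B) : (forall f, G * Phi f = Phi (fun k => f (act (s j) k)) * G) ->
  ((G + hP j) - q%:A) * ((G + hP j) + q^-1%:A) = G * G - d *: (ee u t j * G) - 1.
Proof.
move=> HG; rewrite quadQ; congr (_ - 1).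
rewrite mulrDl !mulrDr HG PhiM scalerDr -mulr_algl -Phi_const PhiZ.
rewrite opprD !addrA ee_Phi scalerAl PhiZ.
rewrite (@Phi_ext (fun k => d * pj j k * (d * pj j k)) (fun k => d * (d * pj j k))); last first.
  by move=> k; rewrite /pj; case: (_ < _)%N; rewrite ?mulr0 ?mul0r ?mulr1.
rewrite addrAC addrK -addrA -addrA -mulrBl -mulrDl -mulNr; congr (_ + _ * _).
rewrite PhiB PhiD PhiN; apply: Phi_ext => k; rewrite /pj !ffunE tpermL tpermR.
have e := nat3 (k (jlo j)) (k (jhi j)); rewrite val_eqE in e.
have e' : ((k (jlo j) == k (jhi j))%:R : R) = - ((k (jhi j) < k (jlo j))%N%:R + (k (jlo j) < k (jhi j))%N%:R - 1).
  by rewrite e opprK.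
rewrite e'; set dd := q - q^-1; ring.
Qed.

Lemma quad : (T j - q%:A) * (T j + q^-1%:A) = g j * g j - d *: (ee u t j * g j) - 1.
Proof.
have TE : T j = g j + hP j by rewrite gE subrK.
by rewrite TE; apply: quad_gen; exact: gPhi.
Qed.

End J.

Lemma zmod_far (a b x y z : B) : a + x + (y + z) - (b + y + (x + z)) = a - b.
Proof.
rewrite [b + y + _]addrACA opprD addrACA subrr addr0 opprD addrACA subrr addr0 //.
Qed.

Lemma far_gen (Gi Gj Hi Hj : B) : Gi * Hj = Hj * Gi -> Gj * Hi = Hi * Gj -> Hi * Hj = Hj * Hi ->
  (Gi + Hi) * (Gj + Hj) - (Gj + Hj) * (Gi + Hi) = Gi * Gj - Gj * Gi.
Proof.
move=> e1 e2 e3; rewrite !mulrDl !mulrDr e1 e2 e3; exact: zmod_far.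
Qed.

Lemma zmod_e3 (X C1 E1 Y E2 Z E3 F C2 : B) : (X + C1 + E1) + (Y + E2) + ((Z + E3) + (F + C2)) = X + (Y + Z) + ((C1 + C2) + ((E1 + E2 + E3) + F)).
Proof. by rewrite [LHS](AC ((3*2)*(2*2)) ((1*(4*6))*((2*9)*((3*5*7)*8)))). Qed.

Lemma expand3 (Ga Gb : B) (sa sb : {perm 'I_N}) (ha hb da : kT -> R) :
  (forall f, Ga * Phi f = Phi (fun k => f (act sa k)) * Ga) ->
  (forall f, Gb * Phi f = Phi (fun k => f (act sb k)) * Gb) ->
  Ga * Ga = 1 + Phi da * Ga ->
  (Ga + Phi ha) * (Gb + Phi hb) * (Ga + Phi ha) =
  Ga * Gb * Ga + (Phi (fun k => ha (act sb (act sa k))) * Ga * Gb + Phi ha * Gb * Ga)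
  + ((Phi (fun k => hb (act sa k)) + Phi (fun k => ha k * hb k * ha k))
     + ((Phi (fun k => hb (act sa k) * da k) * Ga + Phi (fun k => hb (act sa k) * ha (act sa k)) * Ga
        + Phi (fun k => ha k * hb k) * Ga)
        + Phi (fun k => ha k * ha (act sb k)) * Gb)).
Proof.
move=> HA HB Hsq.
rewrite !mulrDl !mulrDr.
have B1 : (Ga * Gb + Ga * Phi hb) * Ga = Ga*Gb*Ga + Phi (fun k => hb (act sa k)) + Phi (fun k => hb (act sa k) * da k) * Ga.
  by rewrite mulrDl HA -[Phi _ * Ga * Ga]mulrA Hsq mulrDr mulr1 mulrA PhiM addrA.
have B2 : (Ga * Gb + Ga * Phi hb) * Phi ha = Phi (fun k => ha (act sb (act sa k))) * Ga * Gb + Phi (fun k => hb (act sa k) * ha (act sa k)) * Ga.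
  by rewrite mulrDl -mulrA HB mulrA HA -[Ga * Phi hb * Phi ha]mulrA PhiM HA.
have B3 : (Phi ha * Gb + Phi ha * Phi hb) * Ga = Phi ha * Gb * Ga + Phi (fun k => ha k * hb k) * Ga.
  by rewrite mulrDl PhiM.
have B4 : (Phi ha * Gb + Phi ha * Phi hb) * Phi ha = Phi (fun k => ha k * ha (act sb k)) * Gb + Phi (fun k => ha k * hb k * ha k).
  by rewrite mulrDl -mulrA HB mulrA !PhiM.
by rewrite B1 B2 B3 B4; apply: zmod_e3.
Qed.

Lemma natL1 (a b c : nat) : ((a < c)%N%:R * (a == b)%:R + (a < c)%N%:R * (b < a)%N%:R
  + (a < b)%N%:R * (b < c)%N%:R : R) = (b < c)%N%:R * (a < c)%N%:R.
Proof.
case: (ltngtP a b) => h1; case: (ltngtP b c) => h2; case: (ltngtP a c) => h3;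
  rewrite /= ?mulr0 ?mul0r ?mulr1 ?addr0 ?add0r //; exfalso; lia.
Qed.

Lemma natL2 (a b c : nat) : ((a < b)%N%:R * (a < c)%N%:R : R) =
  (a < c)%N%:R * (b == c)%:R + (a < c)%N%:R * (c < b)%N%:R + (b < c)%N%:R * (a < b)%N%:R.
Proof.
case: (ltngtP a b) => h1; case: (ltngtP b c) => h2; case: (ltngtP a c) => h3;
  rewrite /= ?mulr0 ?mul0r ?mulr1 ?addr0 ?add0r //; exfalso; lia.
Qed.

Lemma natL3 (a b c : nat) : ((a < b)%N%:R * (b < c)%N%:R * (a < b)%N%:R : R) =
  (b < c)%N%:R * (a < b)%N%:R * (b < c)%N%:R.
Proof. by case: (a < b)%N; case: (b < c)%N; rewrite ?mulr0 ?mul0r ?mulr1. Qed.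

Lemma G3 (a b c : nat) (e : R) : e * (a<c)%N%:R + e * (a<b)%N%:R * (e * (b<c)%N%:R) * (e * (a<b)%N%:R)
  = e*(a<c)%N%:R + e*(b<c)%N%:R * (e*(a<b)%N%:R) * (e*(b<c)%N%:R).
Proof.
case: (ltngtP a b) => h1; case: (ltngtP b c) => h2; case: (ltngtP a c) => h3; rewrite /=;
  try (exfalso; lia); ring.
Qed.

Lemma G4 (a b c : nat) (e : R) : e*(a<c)%N%:R*(e*(a==b)%:R) + e*(a<c)%N%:R*(e*(b<a)%N%:R)
  + e*(a<b)%N%:R*(e*(b<c)%N%:R) = e*(b<c)%N%:R*(e*(a<c)%N%:R).
Proof.
case: (ltngtP a b) => h1; case: (ltngtP b c) => h2; case: (ltngtP a c) => h3; rewrite /=;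
  try (exfalso; lia); ring.
Qed.

Lemma G5 (a b c : nat) (e : R) : e*(a<b)%N%:R*(e*(a<c)%N%:R) = e*(a<c)%N%:R*(e*(b==c)%:R)
  + e*(a<c)%N%:R*(e*(c<b)%N%:R) + e*(b<c)%N%:R*(e*(a<b)%N%:R).
Proof.
case: (ltngtP a b) => h1; case: (ltngtP b c) => h2; case: (ltngtP a c) => h3; rewrite /=;
  try (exfalso; lia); ring.
Qed.

Lemma zmod_cancelW (X X' W : B) : (X + W) - (X' + W) = X - X'.
Proof. by rewrite opprD addrACA subrr addr0. Qed.

Lemma final_gen (X X' G1 G2 : B) (y1 z1 y1' z1' c1 c2 c1' c2' e1 e2 e3 f e1' e2' e3' f' : kT -> R) :
  y1 =1 z1' -> z1 =1 y1' -> (forall k, c1 k + c2 k = c1' k + c2' k) ->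
  (forall k, e1 k + e2 k + e3 k = f' k) -> (forall k, f k = e1' k + e2' k + e3' k) ->
  X + (Phi y1 * G1 * G2 + Phi z1 * G2 * G1) + (Phi c1 + Phi c2 + (Phi e1 * G1 + Phi e2 * G1 + Phi e3 * G1 + Phi f * G2))
  - (X' + (Phi y1' * G2 * G1 + Phi z1' * G1 * G2) + (Phi c1' + Phi c2' + (Phi e1' * G2 + Phi e2' * G2 + Phi e3' * G2 + Phi f' * G1)))
  = X - X'.
Proof.
move=> Hy Hz Hc He Hf.
have -> : Phi y1' * G2 * G1 + Phi z1' * G1 * G2 = Phi y1 * G1 * G2 + Phi z1 * G2 * G1.
  by rewrite addrC -(Phi_ext Hy) -(Phi_ext Hz).
have -> : Phi c1' + Phi c2' = Phi c1 + Phi c2 by rewrite !PhiD; apply: Phi_ext => k; rewrite Hc.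
have -> : Phi e1' * G2 + Phi e2' * G2 + Phi e3' * G2 + Phi f' * G1 =
          Phi e1 * G1 + Phi e2 * G1 + Phi e3 * G1 + Phi f * G2.
  rewrite -!mulrDl !PhiD addrC; congr (_ * _ + _ * _); apply: Phi_ext => k; by rewrite ?He ?Hf.
by rewrite -[X + _ + _]addrA -[X' + _ + _]addrA zmod_cancelW.
Qed.

Lemma braid_gen (i j : 'I_n) (G1 G2 : B) : j = i.+1 :> nat ->
 (forall f, G1 * Phi f = Phi (fun k => f (act (s i) k)) * G1) ->
 (forall f, G2 * Phi f = Phi (fun k => f (act (s j) k)) * G2) ->
 G1 * G1 = 1 + Phi (fun k => d * (k (jlo i) == k (jhi i))%:R) * G1 ->
 G2 * G2 = 1 + Phi (fun k => d * (k (jlo j) == k (jhi j))%:R) * G2 ->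
 (G1 + hP i) * (G2 + hP j) * (G1 + hP i) - (G2 + hP j) * (G1 + hP i) * (G2 + hP j)
   = G1 * G2 * G1 - G2 * G1 * G2.
Proof.
move=> ji H1 H2 Q1 Q2.
rewrite (@expand3 G1 G2 (s i) (s j) _ (fun k => d * pj j k) _ H1 H2 Q1).
rewrite (@expand3 G2 G1 (s j) (s i) _ (fun k => d * pj i k) _ H2 H1 Q2).
have e01 : jhi i = jlo j by apply: val_inj; rewrite /= /bump leq0n add1n ji.
have n01 : jlo i != jlo j by rewrite -val_eqE /= ji neq_ltn ltnSn.
have n12 : jlo j != jhi j by exact: lohi_neq.
have n02 : jlo i != jhi j by rewrite -val_eqE /= /bump leq0n add1n ji neq_ltn ltnW ?ltnSn.
have si0 : tperm (jlo i) (jlo j) (jlo i) = jlo j by rewrite tpermL.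
have si1 : tperm (jlo i) (jlo j) (jlo j) = jlo i by rewrite tpermR.
have si2 : tperm (jlo i) (jlo j) (jhi j) = jhi j by rewrite tpermD // eq_sym.
have sj0 : s j (jlo i) = jlo i by rewrite tpermD // eq_sym.
have sj1 : s j (jlo j) = jhi j by rewrite tpermL.
have sj2 : s j (jhi j) = jlo j by rewrite tpermR.
apply: final_gen => k /=; rewrite /pj ?e01 !ffunE ?si0 ?si1 ?si2 ?sj0 ?sj1 ?sj2 ?ffunE ?si0 ?si1 ?si2 ?sj0 ?sj1 ?sj2.
- by [].
- by [].
- exact: G3.
- by rewrite -!val_eqE; apply: G4.
- by rewrite -!val_eqE; apply: G5.
Qed.

Lemma sD (i : 'I_n) (x : 'I_N) : (val x != i) -> (val x != i.+1) -> s i x = x.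
Proof.
move=> h1 h2; apply: tpermD; rewrite -val_eqE /= ?/bump ?leq0n ?add1n eq_sym //.
Qed.

Lemma TE j : T j = g j + hP j.
Proof. by rewrite gE subrK. Qed.

Lemma far_equiv (i j : 'I_n) : (i.+1 < j)%N || (j.+1 < i)%N ->
  (forall x, g i * t x = t (s i x) * g i) -> (forall x, g j * t x = t (s j x) * g j) ->
  (T i * T j = T j * T i <-> g i * g j = g j * g i).
Proof.
move=> hij Hi Hj.
have Pinv (a b : 'I_n) : (a.+1 < b)%N || (b.+1 < a)%N ->
    Phi (fun k => d * pj b (act (s a) k)) = hP b.
  move=> hab; apply: Phi_ext => k; rewrite /pj !ffunE !sD //=; rewrite ?/bump ?leq0n ?add1n;
  apply/eqP; lia.
have e : T i * T j - T j * T i = g i * g j - g j * g i.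
  rewrite !TE; apply: far_gen.
  - by rewrite (gPhi Hi) Pinv.
  - by rewrite (gPhi Hj) Pinv // orbC.
  - by rewrite !PhiM; apply: Phi_ext => k; rewrite mulrC.
split=> h; apply/eqP; rewrite -subr_eq0; [rewrite -e | rewrite e]; by rewrite h subrr.
Qed.

Lemma quad6 j : (forall x, g j * t x = t (s j x) * g j) ->
  ((T j - q%:A) * (T j + q^-1%:A) = 0 <-> g j * g j = 1 + d *: (ee u t j * g j)).
Proof.
move=> Hj; rewrite (quad Hj); split.
  by move/eqP; rewrite subr_eq0 subr_eq addrC => /eqP.
by move=> ->; rewrite addrK subrr.
Qed.

Lemma Qform j : g j * g j = 1 + d *: (ee u t j * g j) ->
  g j * g j = 1 + Phi (fun k => d * (k (jlo j) == k (jhi j))%:R) * g j.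
Proof. by move=> ->; rewrite scalerAl ee_Phi PhiZ. Qed.

Lemma braid_equiv (i j : 'I_n) : j = i.+1 :> nat ->
  (forall x, g i * t x = t (s i x) * g i) -> (forall x, g j * t x = t (s j x) * g j) ->
  g i * g i = 1 + d *: (ee u t i * g i) -> g j * g j = 1 + d *: (ee u t j * g j) ->
  (T i * T j * T i = T j * T i * T j <-> g i * g j * g i = g j * g i * g j).
Proof.
move=> ji Hi Hj Qi Qj.
have e := braid_gen ji (gPhi Hi) (gPhi Hj) (Qform Qi) (Qform Qj).
rewrite -!TE in e.
split=> h; apply/eqP; rewrite -subr_eq0; [rewrite -e | rewrite e]; by rewrite h subrr.
Qed.

Lemma HG_equiv : HRel u q t T <-> GRel u q t g.
Proof.
split.
  case=> HQ [_ [HB [HF [_ HC]]]].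
  have Hg3 : forall j x, g j * t x = t (s j x) * g j by apply/comm3.
  have Hq6 : forall j, g j * g j = 1 + d *: (ee u t j * g j) by move=> j; apply/(quad6 (Hg3 j)).
  split; first exact: Ht.
  split; first exact: Htc.
  split; first exact: Hg3.
  split; first by move=> i j h; apply/(far_equiv h (Hg3 i) (Hg3 j)); apply: HF.
  split; last exact: Hq6.
  by move=> i j ji; apply/(braid_equiv ji (Hg3 i) (Hg3 j) (Hq6 i) (Hq6 j)); apply: HB.
case=> _ [_ [Hg3 [HF [HB Hq6]]]].
have [Hk Hlh] := (proj2 comm3) Hg3.
split; first by move=> j; apply/(quad6 (Hg3 j)).
split; first exact: Ht.
split; first by move=> i j ji; apply/(braid_equiv ji (Hg3 i) (Hg3 j) (Hq6 i) (Hq6 j)); apply: HB.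
split; first by move=> i j h; apply/(far_equiv h (Hg3 i) (Hg3 j)); apply: HF.
split; first exact: Htc.
by split.
Qed.

End Equiv.
End Multi.

Lemma f_bk (R : idomainType) r (u : 'I_r -> R) (A B : algType R) (f : {lrmorphism A -> B})
   n (t : 'I_n -> A) k : f (bk u t k) = bk u (fun i => f (t i)) k.
Proof.
have fZ a x : f (a *: x) = a *: f x by exact: linearZZ.
rewrite /bk rmorph_prod; apply: eq_bigr => i _; rewrite rmorph_prod; apply: eq_bigr => j _.
by rewrite -(rmorph_alg f) -rmorphB -fZ.
Qed.

Lemma f_Bp (R : idomainType) r (u : 'I_r -> R) q (A B : algType R) (f : {lrmorphism A -> B})
   n (t : 'I_n -> A) i1 i2 : f (Bp u q t i1 i2) = Bp u q (fun i => f (t i)) i1 i2.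
Proof.
have fZ a x : f (a *: x) = a *: f x by exact: linearZZ.
rewrite /Bp fZ rmorph_sum; congr (_ *: _); apply: eq_bigr => k _; exact: f_bk.
Qed.

Theorem theorem3p11 (R : idomainType) (n r : nat) (q : R) (u : 'I_r -> R) :
  (0 < r)%N -> q \is a GRing.unit -> Delta u \is a GRing.unit ->
  forall (H : algType R) (t : 'I_n.+1 -> H) (T : 'I_n -> H),
    presented (fun B => @HRel R r u q B n) t T ->
    presented (fun B => @GRel R r u q B n) t (gimg u q t T).
Proof.
move=> _ Hq HD H t T [HH Huniv].
have [_ [Ht [_ [_ [Htc _]]]]] := HH.
split; first exact/(HG_equiv HD Ht Htc T Hq).
move=> B tB gB HGB.
have [HtB [HtcB _]] := HGB.
pose TB := fun j => gB j - Bp u q tB (jlo j) (jhi j).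
have eg : gimg u q tB TB = gB.
  by apply: FunctionalExtensionality.functional_extensionality => j; rewrite /gimg /TB subrK.
have HRB : HRel u q tB TB by apply/(HG_equiv HD HtB HtcB TB Hq); rewrite eg.
have [f [ft fT funi]] := Huniv B tB TB HRB.
have fBp (f' : {lrmorphism H -> B}) : (forall i, f' (t i) = tB i) -> forall i1 i2,
    f' (Bp u q t i1 i2) = Bp u q tB i1 i2.
  move=> ft' i1 i2; rewrite f_Bp; congr Bp.
  exact: FunctionalExtensionality.functional_extensionality.
exists f; split => //.
  move=> j; rewrite /gimg rmorphD; transitivity (TB j + Bp u q tB (jlo j) (jhi j)).
    by congr (_ + _); [exact: fT | exact: fBp].
  by rewrite /TB subrK.
move=> f' ft' fg' x; apply: funi => // j.
have -> : T j = gimg u q t T j - Bp u q t (jlo j) (jhi j) by rewrite /gimg addrK.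
rewrite rmorphB; rewrite /TB; congr (_ - _); [exact: fg' | exact: fBp].
Qed.
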